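(* Let $R$ be a commutative ring, $n\ge 5$ and $d\ge1$. The assignment $(\Delta,w)\mapsto F_{(\Delta,w)}$ is a bijection between the set of balanced $R$-weighted $(d-1)$-complexes on $[n-1]$ and the set of nonzero homogeneous elements of $\operatorname{Cox}(\overline{\mathcal{M}}_{0,n})$ of degree $d$ that are not divisible by any exceptional section $x_I$. Moreover, for every balancing $w$ of a fixed complex $\Delta$, the element $F_{(\Delta,w)}$ is homogeneous of class $D_\Delta$.
   Context: Setup: $[m]=\{1,\dots,m\}$. Fix a Kapranov–Hassett isomorphism $\overline{\mathcal M}_{0,n}\cong\operatorname{Bl}\mathbb P^{n-3}$ over $\operatorname{Spec}R$: the iterated blow-up of $\mathbb P^{n-3}$ at points $q_1,\dots,q_{n-1}$ in general linear position and then along strict transforms of linear spans of subsets of these points, in order of increasing dimension. Then $\operatorname{Pic}(\overline{\mathcal M}_{0,n})=\mathbb ZH\oplus\bigoplus_I\mathbb ZE_I$, the sum over $I\subseteq[n-1]$ with $1\le|I|\le n-4$, where $H$ is the pulled-back hyperplane class and $E_I$ the exceptional divisor over the span of $\{q_i:i\in I\}$; the degree of a class is its $H$-coefficient. Let $P=R[y_1,\dots,y_{n-1},(x_I)_I]$, graded by $\operatorname{Pic}$ via $[x_I]=E_I$, $[y_i]=H-\sum_{I\not\ni i}E_I$, and set $z_i=\prod_{I\ni i}x_I$. Then $\operatorname{Cox}(\overline{\mathcal M}_{0,n})=\bigoplus_D H^0(\overline{\mathcal M}_{0,n},D)$ is identified with the graded subring $R[(x_I^{\pm1})_I,(y_i/z_i-y_j/z_j)_{i,j}]\cap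 P$, where $x_I$ is the section defining $E_I$; the degree of a homogeneous element equals its total degree in the $y_i$. Complexes: a $k$-simplex on $A$ is a multiset of cardinality $k+1$ with entries in $A$; a $k$-complex is a finite set of distinct $k$-simplices; $\operatorname{mult}_a(\sigma)$ is the multiplicity of $a$ in $\sigma$. An $R$-weighted complex assigns a nonzero $w_\sigma\in R$ to each simplex. With $c(\sigma,S)=\prod_a\binom{\operatorname{mult}_a\sigma}{\operatorname{mult}_aS}$, a weighted $k$-complex is balanced in degree $j$ if $\sum_\sigma c(\sigma,S)w_\sigma=0$ for every multiset $S$ of cardinality $j$ with entries in $A$, and balanced if balanced in every degree $j\in\{0,\dots,k\}$ with $j\le k-1$... precisely: in every degree $0\le j\le k-1$. For a balanced weighted $(d-1)$-complex $(\Delta,w)$ on $[n-1]$, let $y_\sigma=\prod_iy_i^{\operatorname{mult}_i\sigma}$, $z_\sigma=\prod_iz_i^{\operatorname{mult}_i\sigma}$, $f=\sum_{\sigma\in\Delta}w_\sigma y_\sigma/z_\sigma$, and $F_{(\Delta,w)}=\big(\prod_I x_I^{a_I}\big)f$ with $a_I=\max_{\sigma\in\Delta}\sum_{i\in I}\operatorname{mult}_i(\sigma)$ (clearing denominators minimally). For any $(d-1)$-complex $\Delta$ on $[n-1]$, $D_\Delta=dH-\sum_I\big(d-\max_{\sigma\in\Delta}\sum_{i\in I}\operatorname{mult}_i(\sigma)\big)E_I$. *)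

(* Defs.v *)
From HB Require Import structures.
From mathcomp Require Import all_boot all_order all_algebra.
Set Implicit Arguments. Unset Strict Implicit. Unset Printing Implicit Defensive.
Import Order.TTheory GRing.Theory Num.Theory.

Fixpoint mpoly (R : comNzRingType) (k : nat) : comNzRingType :=
  match k with 0 => R | k'.+1 => {poly (mpoly R k')} end.

(* the variable X_i (X_i = 0 if i >= k, never used) *)
Fixpoint mvar (R : comNzRingType) (k i : nat) : mpoly R k :=
  match k return mpoly R k with
  | 0 => 0%R
  | k'.+1 => if i == k' then (('X)%R : {poly mpoly R k'}) else ((mvar R k' i)%:P%R : {poly mpoly R k'})
  end.

Fixpoint mconst (R : comNzRingType) (k : nat) (c : R) : mpoly R k :=
  match k return mpoly R k with
  | 0 => c
  | k'.+1 => ((mconst k' c)%:P%R : {poly mpoly R k'})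
  end.

(* coefficient of the monomial prod_{i<k} X_i^(e i) *)
Fixpoint mcoef (R : comNzRingType) (k : nat) : mpoly R k -> (nat -> nat) -> R :=
  match k return mpoly R k -> (nat -> nat) -> R with
  | 0 => fun p _ => p
  | k'.+1 => fun (p : {poly mpoly R k'}) e => mcoef (p`_(e k'))%R e
  end.

Definition validI (n : nat) (I : {set 'I_(n-1)}) : bool :=
  (1 <= #|I|) && (#|I| <= n - 4).

Definition SI (n : nat) : seq {set 'I_(n-1)} :=
  [seq I <- enum {set 'I_(n-1)} | validI I].

Definition nvars (n : nat) : nat := (n - 1) + size (SI n).

Definition P (R : comNzRingType) (n : nat) : comNzRingType := mpoly R (nvars n).

(* variable y_i has index i, variable x_I has index (n-1) + (position of I in SI n) *)
Definition xidx (n : nat) (I : {set 'I_(n-1)}) : nat := (n - 1) + index I (SI n).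

Definition yv (R : comNzRingType) (n : nat) (i : 'I_(n-1)) : P R n :=
  mvar R (nvars n) i.
Definition xv (R : comNzRingType) (n : nat) (I : {set 'I_(n-1)}) : P R n :=
  mvar R (nvars n) (xidx I).
Definition zv (R : comNzRingType) (n : nat) (i : 'I_(n-1)) : P R n :=
  (\prod_(I <- SI n | i \in I) xv R I)%R.

(* A class  hH + sum_I c_I E_I  is a pair (h, c); only c_I for valid I matter. *)
Definition Pic (n : nat) : Type := (int * ({set 'I_(n-1)} -> int))%type.

Definition eq_class (n : nat) (D1 D2 : Pic n) : Prop :=
  D1.1 = D2.1 /\ forall I, validI I -> D1.2 I = D2.2 I.

(* class of the monomial with exponent vector e:
   [y_i] = H - sum_{I not containing i} E_I,  [x_I] = E_I *)
Definition mono_class (n : nat) (e : nat -> nat) : Pic n :=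
  ((\sum_(i : 'I_(n-1)) Posz (e i))%R,
   fun I => (Posz (e (xidx I)) - \sum_(i : 'I_(n-1) | i \notin I) Posz (e i))%R).

Definition homog_of (R : comNzRingType) (n : nat) (f : P R n) (D : Pic n) : Prop :=
  forall e : nat -> nat, mcoef f e != 0%R -> eq_class (mono_class n e) D.

Definition homog_deg (R : comNzRingType) (n : nat) (f : P R n) (d : nat) : Prop :=
  exists D : Pic n, homog_of f D /\ D.1 = Posz d.

(* R-subalgebra of P generated by the x_I and v_ij = y_i z_j - y_j z_i
   (note y_i/z_i - y_j/z_j = v_ij / (z_i z_j)). *)
Inductive gen_alg (R : comNzRingType) (n : nat) : P R n -> Prop :=
  | ga_const (c : R) : gen_alg (mconst (nvars n) c)
  | ga_x (I : {set 'I_(n-1)}) : validI I -> gen_alg (xv R I)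
  | ga_v (i j : 'I_(n-1)) : gen_alg (yv R i * zv R j - yv R j * zv R i)%R
  | ga_opp f : gen_alg f -> gen_alg (- f)%R
  | ga_add f g : gen_alg f -> gen_alg g -> gen_alg (f + g)%R
  | ga_mul f g : gen_alg f -> gen_alg g -> gen_alg (f * g)%R.

(* f in P lies in R[(x_I^{+-1}), (y_i/z_i - y_j/z_j)] (inside the Laurent ring
   R[y, x^{+-1}]) iff some monomial in the x_I times f lies in gen_alg. *)
Definition inCox (R : comNzRingType) (n : nat) (f : P R n) : Prop :=
  exists a : {set 'I_(n-1)} -> nat,
    gen_alg ((\prod_(I <- SI n) xv R I ^+ a I) * f)%R.

Definition divCox (R : comNzRingType) (n : nat) (I : {set 'I_(n-1)}) (f : P R n) : Prop :=
  exists2 g : P R n, inCox g & f = (xv R I * g)%R.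

(* a (d-1)-simplex on [n-1]: a multiset of cardinality d, given by its
   multiplicity function (multiplicities are <= d) *)
Definition simplex (n d : nat) : finType := {ffun 'I_(n-1) -> 'I_d.+1}.

Definition mult_size (n d : nat) (s : simplex n d) : nat := \sum_i (s i : nat).

Definition is_complex (n d : nat) (Delta : {set simplex n d}) : Prop :=
  forall s, s \in Delta -> mult_size s = d.

(* An R-weighted (d-1)-complex (Delta, w) (w_s nonzero for s in Delta) is
   encoded by the function W with W s = w_s on Delta and W s = 0 off Delta;
   thus Delta = support of W. *)
Definition supp (R : comNzRingType) (n d : nat) (W : {ffun simplex n d -> R}) :
  {set simplex n d} := [set s | W s != 0%R].

Definition is_wcomplex (R : comNzRingType) (n d : nat) (W : {ffun simplex n d -> R}) : Prop :=
  is_complex (supp W).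

Definition cmult (n d : nat) (s : simplex n d) (S : {ffun 'I_(n-1) -> nat}) : nat :=
  \prod_i 'C(s i, S i).

Definition balanced_deg (R : comNzRingType) (n d : nat) (W : {ffun simplex n d -> R})
  (j : nat) : Prop :=
  forall S : {ffun 'I_(n-1) -> nat}, \sum_i S i = j ->
    (\sum_(s in supp W) (cmult s S)%:R * W s)%R = 0%R.

Definition balanced (R : comNzRingType) (n d : nat) (W : {ffun simplex n d -> R}) : Prop :=
  forall j, j < d -> balanced_deg W j.

Definition aI (n d : nat) (Delta : {set simplex n d}) (I : {set 'I_(n-1)}) : nat :=
  \max_(s in Delta) \sum_(i in I) (s i : nat).

(* F_{(Delta,w)} = (prod_I x_I^{a_I}) * sum_s w_s y_s / z_s, computed in P:
   y_s / z_s = y^s * prod_I x_I^{-(sum_{i in I} mult_i s)}. *)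
Definition Fcx (R : comNzRingType) (n d : nat) (W : {ffun simplex n d -> R}) : P R n :=
  (\sum_(s in supp W)
     mconst (nvars n) (W s) * (\prod_i yv R i ^+ s i)
     * \prod_(I <- SI n) xv R I ^+ (aI (supp W) I - \sum_(i in I) (s i : nat)))%R.

Definition DDelta (n d : nat) (Delta : {set simplex n d}) : Pic n :=
  (Posz d, fun I => (- (Posz d - Posz (aI Delta I)))%R).

(* Main.v *)
Require Import Defs.
From HB Require Import structures.
From mathcomp Require Import all_boot all_order all_algebra.
From Stdlib Require Import Classical.
From mathcomp Require Import zify ring lra.
Import Order.TTheory GRing.Theory Num.Theory.
Set Implicit Arguments. Unset Strict Implicit. Unset Printing Implicit Defensive.
Local Open Scope ring_scope.

Section MP.
Variable R : comNzRingType.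

Lemma mcoef0 k e : mcoef (0 : mpoly R k) e = 0.
Proof. by elim: k => [|k IH] //=; rewrite coef0 IH. Qed.

Lemma mcoefD k (p q : mpoly R k) e : mcoef (p + q) e = mcoef p e + mcoef q e.
Proof. by elim: k p q => [|k IH] p q //=; rewrite coefD IH. Qed.

Lemma mcoefN k (p : mpoly R k) e : mcoef (- p) e = - mcoef p e.
Proof. by elim: k p => [|k IH] p //=; rewrite coefN IH. Qed.

Lemma mcoef_sum k (I : Type) (r : seq I) (Pr : pred I) (F : I -> mpoly R k) e :
  mcoef (\sum_(i <- r | Pr i) F i) e = \sum_(i <- r | Pr i) mcoef (F i) e.
Proof.
by apply: (big_morph (fun p => mcoef p e)); [move=> ??; apply: mcoefD | apply: mcoef0].
Qed.

Lemma mcoefCM k c (p : mpoly R k) e : mcoef (mconst k c * p) e = c * mcoef p e.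
Proof. by elim: k p => [|k IH] p //=; rewrite coefCM IH. Qed.

Lemma mcoef_eqe k (p : mpoly R k) e e' :
  (forall i, (i < k)%N -> e i = e' i) -> mcoef p e = mcoef p e'.
Proof.
elim: k p => [|k IH] p H //=.
rewrite H // IH // => i lt; apply: H; exact: ltnW.
Qed.

Definition upd (e : nat -> nat) (k j : nat) := fun i => if i == k then j else e i.

Lemma mpoly_ext k (p q : mpoly R k) :
  (forall e, mcoef p e = mcoef q e) -> p = q.
Proof.
elim: k p q => [|k IH] p q H; first exact: (H (fun _ => 0%N)).
apply/polyP => j; apply: IH => e.
have := H (upd e k j); rewrite /= /upd eqxx => E.
rewrite (@mcoef_eqe _ _ _ (upd e k j)); last first.
  by move=> i lt; rewrite /upd (ltn_eqF lt).
rewrite E; apply: mcoef_eqe => i lt; by rewrite /upd (ltn_eqF lt).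
Qed.

Lemma mcoef_nz k (p : mpoly R k) : p != 0 -> exists e, mcoef p e != 0.
Proof.
move=> pn; apply: NNPP => H; move/eqP: pn; apply; apply: mpoly_ext => e.
rewrite mcoef0; case E: (mcoef p e == 0); first exact/eqP.
by exfalso; apply: H; exists e; rewrite E.
Qed.
End MP.

Section MP2.
Variable R : comNzRingType.

Definition mono k (f : nat -> nat) : mpoly R k := \prod_(j < k) mvar R k j ^+ f j.

Lemma monoS k f : mono k.+1 f = (mono k f)%:P * 'X^(f k).
Proof.
rewrite /mono big_ord_recr /= eqxx rmorph_prod; congr (_ * _).
apply: eq_bigr => j _; by rewrite (ltn_eqF (ltn_ord j)) rmorphXn.
Qed.

Lemma mcoef_mono k c f e :
  mcoef (mconst k c * mono k f) e = if all (fun j => e j == f j) (iota 0 k) then c else 0.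
Proof.
elim: k => [|k IH]; first by rewrite /mono big_ord0 /= mulr1.
have -> : iota 0 k.+1 = iota 0 k ++ [:: k] by rewrite -addn1 iotaD.
rewrite all_cat /= andbT.
rewrite monoS /= mulrA -rmorphM mul_polyC coefZ coefXn.
case: (e k == f k); rewrite ?mulr1 ?mulr0 ?mcoef0 ?IH ?andbF ?andbT //.
Qed.

Lemma lreg_polyC' (A : nzRingType) (c : A) : GRing.lreg c -> GRing.lreg (c%:P).
Proof.
move=> cr p q E; apply/polyP => i; apply: cr.
by rewrite -!coefCM E.
Qed.

Lemma lreg_X' (A : nzRingType) : GRing.lreg ('X : {poly A}).
Proof.
move=> p q E; apply/polyP => i.
by have := congr1 (fun r : {poly A} => r`_i.+1) E; rewrite /= !coefXM.
Qed.

Lemma mvar_lreg k i : (i < k)%N -> GRing.lreg (mvar R k i).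
Proof.
elim: k => [|k IH] //= lt.
case: eqP => [_|ne]; first exact: lreg_X'.
apply: lreg_polyC'; apply: IH.
by rewrite ltnS leq_eqVlt in lt; case/orP: lt => // /eqP.
Qed.

Lemma mcoef_mvarM0 k i (g : mpoly R k) e :
  (i < k)%N -> e i = 0%N -> mcoef (mvar R k i * g) e = 0.
Proof.
elim: k g => [|k IH] //= g lt ei.
case: eqP => [E|ne].
  by rewrite E in ei; rewrite coefXM ei /= mcoef0.
rewrite coefCM IH //.
by rewrite ltnS leq_eqVlt in lt; case/orP: lt => // /eqP.
Qed.

Lemma mdiv k i (p : mpoly R k) :
  (i < k)%N -> (forall e, mcoef p e != 0 -> (0 < e i)%N) ->
  exists g, p = mvar R k i * g.
Proof.
elim: k p => [|k IH] //= p lt H.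
case: eqP => [E|ne].
  have p0 : p`_0 = 0.
    apply: mpoly_ext => e; rewrite mcoef0.
    have := H (upd e k 0); rewrite /upd eqxx.
    rewrite (@mcoef_eqe _ _ _ _ e); last by move=> j lj; rewrite (ltn_eqF lj).
    rewrite E eqxx => h; case: (mcoef p`_0 e =P 0) => // ne; by have := h (introN eqP ne).
  exists (\poly_(j < size p) p`_j.+1); apply/polyP => j.
  rewrite coefXM; case: j => [|j] //=; rewrite coef_poly.
  case: ltnP => // le; by rewrite nth_default // (leq_trans le).
have lt' : (i < k)%N by rewrite ltnS leq_eqVlt in lt; case/orP: lt => // /eqP.
have Hj : forall j, exists g, p`_j == mvar R k i * g.
  move=> j; have [g ->] : exists g, p`_j = mvar R k i * g; last by exists g.
  apply: IH => // e; have := H (upd e k j); rewrite /upd eqxx.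
  rewrite (@mcoef_eqe _ _ _ _ e); last by move=> l ll; rewrite (ltn_eqF ll).
  move=> h1 h2; have := h1 h2; by rewrite (negbTE (introN eqP ne)).
exists (\poly_(j < size p) xchoose (Hj j)); apply/polyP => j.
rewrite coefCM coef_poly; case: ltnP => le.
  exact/eqP/(xchooseP (Hj j)).
by rewrite mulr0 nth_default.
Qed.

Variables (A : comNzRingType) (iota : {rmorphism R -> A}) (v : nat -> A).
Fixpoint mevalM (k : nat) : {rmorphism mpoly R k -> A} :=
  match k return {rmorphism mpoly R k -> A} with
  | 0 => iota
  | k'.+1 => (horner_morph (fun a => mulrC (v k') (mevalM k' a)) : {rmorphism {poly mpoly R k'} -> A})
  end.

Lemma mevalM_var k i : (i < k)%N -> mevalM k (mvar R k i) = v i.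
Proof.
elim: k => [|k IH] //= lt.
case: eqP => [->|ne]; first by rewrite horner_morphX.
rewrite horner_morphC IH //.
by rewrite ltnS leq_eqVlt in lt; case/orP: lt => // /eqP.
Qed.

Lemma mevalM_const k c : mevalM k (mconst k c) = iota c.
Proof. by elim: k => [|k IH] //=; rewrite horner_morphC IH. Qed.

End MP2.
Section PL.
Variables (R : comNzRingType) (n : nat).
Local Notation m := (n - 1)%N.

Lemma SI_uniq : uniq (SI n).
Proof. by rewrite /SI filter_uniq // enum_uniq. Qed.

Lemma mem_SI I : (I \in SI n) = validI I.
Proof. by rewrite /SI mem_filter mem_enum andbT. Qed.

Lemma xidx_nth t : (t < size (SI n))%N -> xidx (nth set0 (SI n) t) = (m + t)%N.
Proof. by move=> lt; rewrite /xidx index_uniq // SI_uniq. Qed.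

Definition Mm (s : 'I_m -> nat) (g : {set 'I_m} -> nat) : P R n :=
  \prod_i yv R i ^+ s i * \prod_(I <- SI n) xv R I ^+ g I.

Definition expf (s : 'I_m -> nat) (g : {set 'I_m} -> nat) : nat -> nat :=
  fun j => if (insub j : option 'I_m) is Some i then s i
           else g (nth set0 (SI n) (j - m)).

Lemma M_mono s g : Mm s g = mono R (nvars n) (expf s g).
Proof.
rewrite /mono /nvars big_split_ord /=; congr (_ * _).
  apply: eq_bigr => i _; by rewrite /expf /= valK.
rewrite (big_nth set0) big_mkord; apply: eq_bigr => t _.
have hf : (insub (m + t) : option 'I_m) = None.
  by apply: insubF; rewrite ltnNge leq_addr.
rewrite /expf /= hf addKn /xv xidx_nth //.
Qed.

Definition Mmatch (e : nat -> nat) (s : 'I_m -> nat) (g : {set 'I_m} -> nat) : bool :=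
  [forall i : 'I_m, e i == s i] && all (fun I => e (xidx I) == g I) (SI n).

Lemma mcoef_M c s g e :
  mcoef (mconst (nvars n) c * Mm s g) e = if Mmatch e s g then c else 0.
Proof.
rewrite M_mono mcoef_mono; congr (if _ then _ else _).
rewrite /nvars iotaD all_cat add0n /Mmatch; congr (_ && _).
  apply/idP/idP.
    move/allP => H; apply/forallP => i.
    have := H (nat_of_ord i); rewrite mem_iota /= add0n ltn_ord => /(_ isT).
    by rewrite /expf valK.
  move/forallP => H; apply/allP => j; rewrite mem_iota add0n /= => lt.
  have := H (Ordinal lt); by rewrite /expf /= insubT.
have := iotaDl m 0 (size (SI n)); rewrite addn0 => ->.
rewrite -{2}(mkseq_nth set0 (SI n)) /mkseq !all_map.
apply: eq_in_all => t; rewrite mem_iota add0n /= => lt.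
have hf : (insub (m + t) : option 'I_m) = None.
  by apply: insubF; rewrite ltnNge leq_addr.
by rewrite /expf hf addKn xidx_nth.
Qed.

End PL.
Lemma sumPosz (I : finType) (Pr : pred I) (F : I -> nat) :
  \sum_(i | Pr i) (Posz (F i)) = Posz (\sum_(i | Pr i) F i)%N.
Proof. rewrite -natz natr_sum; apply: eq_bigr => i _; by rewrite natz. Qed.

Lemma sum_split (T : finType) (I : {pred T}) (F : T -> nat) :
  (\sum_i F i = \sum_(i in I) F i + \sum_(i | i \notin I) F i)%N.
Proof. by rewrite (bigID (mem I)). Qed.

Section FC.
Variables (R : comNzRingType) (n d : nat).
Local Notation m := (n - 1)%N.

Definition sv (s : simplex n d) : 'I_m -> nat := fun i => (s i : nat).
Definition gW (W : {ffun simplex n d -> R}) (s : simplex n d) (I : {set 'I_m}) : nat :=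
  (aI (supp W) I - \sum_(i in I) (s i : nat))%N.

Lemma Fcx_M W : Fcx W = \sum_(s in supp W) mconst (nvars n) (W s) * Mm R (sv s) (gW W s).
Proof. rewrite /Fcx; apply: eq_bigr => s _; by rewrite /Mm mulrA. Qed.

Lemma mcoef_Fcx W e :
  mcoef (Fcx W) e = \sum_(s in supp W) if Mmatch e (sv s) (gW W s) then W s else 0.
Proof. rewrite Fcx_M mcoef_sum; apply: eq_bigr => s _; exact: mcoef_M. Qed.

Lemma Mmatch_uniq e (s s' : simplex n d) g g' :
  Mmatch e (sv s) g -> Mmatch e (sv s') g' -> s = s'.
Proof.
case/andP => /forallP H1 _ /andP [/forallP H2 _]; apply/ffunP => i; apply: val_inj.
have a := eqP (H1 i); have b := eqP (H2 i); exact: (etrans (esym a) b).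
Qed.


Lemma mcoef_Fcx_at (W : {ffun simplex n d -> R}) e s :
  s \in supp W -> Mmatch e (sv s) (gW W s) -> mcoef (Fcx W) e = W s.
Proof.
move=> sS M; rewrite mcoef_Fcx (bigD1 s) //= M big1 ?addr0 // => s' /andP [_ ne].
case: ifP => // M'; by rewrite (Mmatch_uniq M' M) eqxx in ne.
Qed.

Lemma mcoef_Fcx_nz (W : {ffun simplex n d -> R}) e :
  mcoef (Fcx W) e != 0 -> exists2 s, s \in supp W & Mmatch e (sv s) (gW W s).
Proof.
rewrite mcoef_Fcx => H; apply: NNPP => N; move/eqP: H; apply.
apply: big1 => s sS; case: ifP => // M; by exfalso; apply: N; exists s.
Qed.

Lemma Fcx_inj (W1 W2 : {ffun simplex n d -> R}) : Fcx W1 = Fcx W2 -> W1 = W2.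
Proof.
move=> E; apply/ffunP => s.
wlog sS : W1 W2 E / s \in supp W1.
  move=> H; case S1: (s \in supp W1); first exact: H.
  case S2: (s \in supp W2); first by symmetry; apply: H.
  by move: S1 S2; rewrite !inE => /negbFE/eqP -> /negbFE/eqP ->.
pose e := expf (sv s) (gW W1 s).
have M : Mmatch e (sv s) (gW W1 s).
  apply/andP; split; first by apply/forallP => i; rewrite /e /expf valK.
  apply/allP => I IS; rewrite /e /expf.
  have lt : (index I (SI n) < size (SI n))%N by rewrite index_mem.
  have hf : (insub (xidx I) : option 'I_m) = None.
    by apply: insubF; rewrite /xidx ltnNge leq_addr.
  by rewrite hf /xidx addKn nth_index.
have := mcoef_Fcx_at sS M; rewrite E => h1.
have : mcoef (Fcx W2) e != 0 by rewrite h1; rewrite inE in sS.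
case/mcoef_Fcx_nz => s' s'S M'.
have ss' := Mmatch_uniq M' M; subst s'.
by rewrite -h1 (mcoef_Fcx_at s'S M').
Qed.

Lemma Fcx_homog (Delta : {set simplex n d}) (W : {ffun simplex n d -> R}) :
  is_complex Delta -> supp W = Delta -> homog_of (Fcx W) (DDelta Delta).
Proof.
move=> cD sW e /mcoef_Fcx_nz [s sS /andP [/forallP H1 /allP H2]].
have ms : mult_size s = d by apply: cD; rewrite -sW.
have ey : forall i : 'I_m, e i = s i by move=> i; apply/eqP; exact: H1.
split.
  rewrite /mono_class /DDelta /= (eq_bigr (fun i => Posz (s i))); last by move=> i _; rewrite ey.
  by rewrite sumPosz; congr Posz; exact: ms.
move=> I vI; rewrite /mono_class /DDelta /=.
have := H2 I; rewrite mem_SI vI => /(_ isT) /eqP ->.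
rewrite (eq_bigr (fun i => Posz (s i))); last by move=> i _; rewrite ey.
rewrite sumPosz /gW sW.
have le : (\sum_(i in I) (s i : nat) <= aI Delta I)%N.
  by rewrite -sW /aI; apply: leq_bigmax_cond.
have sp := etrans (esym ms) (sum_split I (fun i => (s i : nat))).
move: le sp; set A := aI Delta I; set B := (\sum_(i in I) _)%N; set C := (\sum_(i | _) _)%N.
move=> le sp; lia.
Qed.

End FC.
Section ID.
Variables (R : comNzRingType) (n d : nat).
Local Notation m := (n - 1)%N.

Fixpoint mconstM k : {rmorphism R -> mpoly R k} :=
  match k with 0 => idfun | k.+1 => (polyC \o mconstM k)%FUN end.

Lemma mconstME k c : mconstM k c = mconst k c.
Proof. by elim: k => [|k IH] //=; rewrite IH. Qed.

Definition Zc : P R n := \prod_(I <- SI n) xv R I.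
Definition zc' (i : 'I_m) : P R n := \prod_(I <- SI n | i \notin I) xv R I.
Definition xa (a : {set 'I_m} -> nat) : P R n := \prod_(I <- SI n) xv R I ^+ a I.

Lemma zv_zc' i : zv R i * zc' i = Zc.
Proof.
rewrite /zv /zc' /Zc big_mkcond [X in _ * X]big_mkcond -big_split.
apply: eq_bigr => I _ /=; by case: (i \in I); rewrite ?mulr1 ?mul1r.
Qed.

Lemma prod_zc' (s : 'I_m -> nat) :
  \prod_i zc' i ^+ s i = \prod_(I <- SI n) xv R I ^+ (\sum_(i | i \notin I) s i)%N.
Proof.
transitivity (\prod_i \prod_(I <- SI n) (if i \notin I then xv R I ^+ s i else 1)).
  by apply: eq_bigr => i _; rewrite /zc' -prodrXl big_mkcond.
transitivity (\prod_(I <- SI n) \prod_i (if i \notin I then xv R I ^+ s i else 1)).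
  exact: exchange_big.
apply: eq_bigr => I _.
rewrite -prodrXr [RHS]big_mkcond /=; apply: eq_bigr => i _; by case: ifP.
Qed.

Lemma L_id (u : 'I_m -> P R n) (s : simplex n d) (a : {set 'I_m} -> nat) :
  mult_size s = d -> (forall I : {set 'I_m}, \sum_(i in I) (s i : nat) <= a I)%N ->
  Zc ^+ d * (\prod_i u i ^+ s i * \prod_(I <- SI n) xv R I ^+ (a I - \sum_(i in I) (s i : nat))%N) =
  xa a * \prod_i (u i * zc' i) ^+ s i.
Proof.
move=> ms le.
rewrite [X in _ = _ * X](eq_bigr (fun i => u i ^+ s i * zc' i ^+ s i)); last by move=> i _; rewrite exprMn.
rewrite big_split /= prod_zc' /Zc -prodrXl /xa mulrCA [RHS]mulrCA; congr (_ * _).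
rewrite -!big_split /=; apply: eq_bigr => I _; rewrite -!exprD; congr (_ ^+ _).
have sp := etrans (esym ms) (sum_split I (fun i => (s i : nat))).
have e : (\sum_(i | i \notin I) (s i : nat) = \sum_(i < m | i \notin I) (s i : nat))%N by [].
have := le I; rewrite e in sp; move: sp.
set B := (\sum_(i in I) _)%N; set C := (\sum_(i < m | _) _)%N.
move=> sp h; rewrite sp; clear -h; move: B C h => B C h; lia.
Qed.

Lemma ga_mconst c : gen_alg (mconst (nvars n) c : P R n).
Proof. exact: ga_const. Qed.

Lemma ga0 : gen_alg (0 : P R n).
Proof. by rewrite -(rmorph0 (mconstM (nvars n))) mconstME; apply: ga_const. Qed.

Lemma ga1 : gen_alg (1 : P R n).
Proof. by rewrite -(rmorph1 (mconstM (nvars n))) mconstME; apply: ga_const. Qed.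

Lemma ga_sum (T : Type) (r : seq T) (Pr : pred T) (F : T -> P R n) :
  (forall i, Pr i -> gen_alg (F i)) -> gen_alg (\sum_(i <- r | Pr i) F i).
Proof. move=> H; apply: big_ind => //; [exact: ga0 | exact: ga_add]. Qed.

Lemma ga_prod (T : Type) (r : seq T) (Pr : pred T) (F : T -> P R n) :
  (forall i, Pr i -> gen_alg (F i)) -> gen_alg (\prod_(i <- r | Pr i) F i).
Proof. move=> H; apply: big_ind => //; [exact: ga1 | exact: ga_mul]. Qed.

Lemma ga_exp (f : P R n) k : gen_alg f -> gen_alg (f ^+ k).
Proof. move=> H; elim: k => [|k IH]; [exact: ga1 | rewrite exprS; exact: ga_mul]. Qed.

Lemma xa_zv i0 : zv R i0 ^+ d = xa (fun I => if i0 \in I then d else 0%N).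
Proof.
rewrite /zv -prodrXl /xa big_mkcond; apply: eq_bigr => I _; case: ifP => _ //; by rewrite expr0.
Qed.

Lemma xv_lreg I : I \in SI n -> GRing.lreg (xv R I).
Proof.
move=> IS; apply: mvar_lreg; by rewrite /xidx /nvars ltn_add2l index_mem.
Qed.

Lemma Zc_lreg : GRing.lreg Zc.
Proof.
rewrite /Zc big_seq; apply: big_ind => //; [exact: lreg1 | exact: lregM | exact: xv_lreg].
Qed.

Lemma xa_lreg a : GRing.lreg (xa a).
Proof.
rewrite /xa big_seq; apply: big_ind => //; [exact: lreg1 | exact: lregM | ].
move=> I IS; apply: lregX; exact: xv_lreg.
Qed.

End ID.
Section EXP.
Variables (R : comNzRingType) (n d : nat).
Variables (A : comNzRingType) (iota : {rmorphism R -> A}).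
Local Notation m := (n - 1)%N.

Definition toN (S : simplex n d) : {ffun 'I_m -> nat} := [ffun i => (S i : nat)].
Definition BS (W : {ffun simplex n d -> R}) (S : simplex n d) : R :=
  \sum_(s in supp W) (cmult s (toN S))%:R * W s.

Lemma binom_ext (x y : A) k : (k <= d)%N ->
  (x + y) ^+ k = \sum_(j < d.+1) ('C(k, j))%:R * x ^+ j * y ^+ (k - j).
Proof.
move=> kd; rewrite addrC exprDn.
rewrite (big_ord_widen d.+1 (fun i => y ^+ (k - i) * x ^+ i *+ 'C(k, i))) // big_mkcond.
apply: eq_bigr => j _; case: ltnP => h.
  rewrite -mulr_natl; ring.
by rewrite bin_small // !mul0r.
Qed.

Lemma multinom (a : 'I_m -> A) (b : A) (s : simplex n d) :
  \prod_i (a i + b) ^+ s i =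
  \sum_(S : simplex n d) (cmult s (toN S))%:R * \prod_i a i ^+ S i * b ^+ (mult_size s - mult_size S).
Proof.
rewrite (eq_bigr (fun i => \sum_(j : 'I_d.+1) ('C(s i, j))%:R * a i ^+ j * b ^+ (s i - j))); last first.
  by move=> i _; apply: binom_ext; rewrite -ltnS ltn_ord.
rewrite bigA_distr_bigA /=; apply: eq_bigr => S _.
rewrite !big_split /= -natr_prod prodrXr.
have cE : cmult s (toN S) = (\prod_i 'C(s i, S i))%N.
  by rewrite /cmult; apply: eq_bigr => i _; rewrite ffunE.
rewrite cE; case: (boolP [forall i, (S i <= s i)%N]) => [/forallP le | /forallPn [i]].
  by rewrite /mult_size sumnB.
move=> nle; have lt : (s i < S i)%N by rewrite ltnNge.
have -> : (\prod_i 'C(s i, S i))%N = 0%N.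
  by rewrite (bigD1 i) //= bin_small ?mul0n.
by rewrite !mul0r.
Qed.

Lemma EXP (W : {ffun simplex n d -> R}) (a : 'I_m -> A) (b : A) : is_wcomplex W ->
  \sum_(s in supp W) iota (W s) * \prod_i (a i + b) ^+ s i =
  \sum_(S : simplex n d) iota (BS W S) * \prod_i a i ^+ S i * b ^+ (d - mult_size S).
Proof.
move=> cW.
transitivity (\sum_(s in supp W) \sum_(S : simplex n d)
   iota ((cmult s (toN S))%:R * W s) * \prod_i a i ^+ S i * b ^+ (d - mult_size S)).
  apply: eq_bigr => s sS; rewrite multinom (cW s sS) mulr_sumr; apply: eq_bigr => S _.
  by rewrite rmorphM rmorph_nat !mulrA [iota (W s) * _]mulrC.
rewrite exchange_big /=; apply: eq_bigr => S _.
by rewrite /BS rmorph_sum !mulr_suml.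
Qed.

Lemma BS_low (W : {ffun simplex n d -> R}) S :
  balanced W -> (mult_size S < d)%N -> BS W S = 0.
Proof.
move=> bW lt; apply: (bW _ lt); rewrite /mult_size; apply: eq_bigr => i _; by rewrite ffunE.
Qed.

Lemma cmult_diff (s S : simplex n d) :
  mult_size s = d -> (d <= mult_size S)%N -> s != S -> cmult s (toN S) = 0%N.
Proof.
move=> ms le ne.
case: (boolP [exists i, (s i < S i)%N]) => [/existsP [i lt] | /existsPn H].
  by rewrite /cmult (bigD1 i) //= ffunE bin_small ?mul0n.
exfalso; move/negP: ne; apply; apply/eqP/ffunP => i; apply: val_inj.
have le' : forall j, (S j <= s j)%N by move=> j; have := H j; rewrite -leqNgt.
have : (\sum_i (s i - S i) == 0)%N.
  rewrite sumnB // -/(mult_size s) -/(mult_size S) ms subn_eq0 //.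
rewrite sum_nat_eq0 => /forallP /(_ i) /implyP /(_ isT); rewrite subn_eq0 => h.
apply/eqP; rewrite eqn_leq h; exact: le'.
Qed.

Lemma BS_top (W : {ffun simplex n d -> R}) S :
  is_wcomplex W -> (d <= mult_size S)%N -> BS W S = W S.
Proof.
move=> cW le; rewrite /BS.
case: (boolP (S \in supp W)) => SS.
  rewrite (bigD1 S) //= big1 ?addr0.
    have -> : cmult S (toN S) = 1%N.
      rewrite /cmult big1 // => i _; by rewrite ffunE binn.
    by rewrite mul1r.
  move=> s /andP [sS ne]; by rewrite cmult_diff // ?mul0r //; apply: cW.
rewrite big1; last first.
  move=> s sS; rewrite cmult_diff ?mul0r //; first exact: cW.
  by apply: contraNneq SS => <-.
by move: SS; rewrite inE negbK => /eqP ->.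
Qed.

Lemma EXP_bal (W : {ffun simplex n d -> R}) (a : 'I_m -> A) (b : A) :
  is_wcomplex W -> balanced W ->
  \sum_(s in supp W) iota (W s) * \prod_i (a i + b) ^+ s i =
  \sum_(s in supp W) iota (W s) * \prod_i a i ^+ s i.
Proof.
move=> cW bW; rewrite EXP //.
rewrite [RHS]big_mkcond; apply: eq_bigr => S _ /=.
case: (ltnP (mult_size S) d) => h.
  rewrite BS_low // rmorph0 !mul0r; case: ifP => // SS.
  by move: h; rewrite (cW S SS) ltnn.
rewrite BS_top // (_ : (d - mult_size S)%N = 0%N) ?expr0 ?mulr1; last first.
  by apply/eqP; rewrite subn_eq0.
case: ifP => // SS.
by move: SS; rewrite inE => /negbFE/eqP ->; rewrite rmorph0 mul0r.
Qed.

End EXP.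
Section P1.
Variables (R : comNzRingType) (n d : nat).
Local Notation m := (n - 1)%N.

Lemma Mmatch_expf (s : 'I_m -> nat) (g : {set 'I_m} -> nat) : Mmatch (expf s g) s g.
Proof.
apply/andP; split; first by apply/forallP => i; rewrite /expf valK.
apply/allP => I IS; rewrite /expf.
have hf : (insub (xidx I) : option 'I_m) = None.
  by apply: insubF; rewrite /xidx ltnNge leq_addr.
by rewrite hf /xidx addKn nth_index.
Qed.

Definition hh (i : 'I_m) : P R n := yv R i * zc' R i.
Definition vv (i0 i : 'I_m) : P R n := yv R i * zv R i0 - yv R i0 * zv R i.

Lemma vv_zc' i0 i : vv i0 i * zc' R i = zv R i0 * (hh i - hh i0).
Proof.
rewrite /hh /vv.
have -> : zv R i0 * (yv R i * zc' R i - yv R i0 * zc' R i0) =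
          zv R i0 * yv R i * zc' R i - yv R i0 * (zv R i0 * zc' R i0) by ring.
rewrite zv_zc' -(zv_zc' R i); ring.
Qed.

Definition Tm (W : {ffun simplex n d -> R}) (u : 'I_m -> P R n) (s : simplex n d) : P R n :=
  \prod_i u i ^+ s i * \prod_(I <- SI n) xv R I ^+ (aI (supp W) I - \sum_(i in I) (s i : nat))%N.

Lemma Fcx_Tm (W : {ffun simplex n d -> R}) :
  Fcx W = \sum_(s in supp W) mconst (nvars n) (W s) * Tm W (@yv R n) s.
Proof. apply: eq_bigr => s _; by rewrite /Tm mulrA. Qed.

Lemma aI_ge (W : {ffun simplex n d -> R}) s (I : {set 'I_m}) :
  s \in supp W -> (\sum_(i in I) (s i : nat) <= aI (supp W) I)%N.
Proof. move=> sS; rewrite /aI; exact: leq_bigmax_cond. Qed.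

Lemma ZcT (W : {ffun simplex n d -> R}) (u : 'I_m -> P R n) : is_wcomplex W ->
  Zc R n ^+ d * \sum_(s in supp W) mconst (nvars n) (W s) * Tm W u s =
  xa R (aI (supp W)) * \sum_(s in supp W) mconst (nvars n) (W s) * \prod_i (u i * zc' R i) ^+ s i.
Proof.
move=> cW; rewrite !mulr_sumr; apply: eq_bigr => s sS.
rewrite mulrCA /Tm L_id //; first by rewrite mulrCA.
  exact: cW.
move=> I; exact: aI_ge.
Qed.

Definition Gh (W : {ffun simplex n d -> R}) : P R n :=
  \sum_(s in supp W) mconst (nvars n) (W s) * \prod_i hh i ^+ s i.

Lemma ZcF (W : {ffun simplex n d -> R}) : is_wcomplex W ->
  Zc R n ^+ d * Fcx W = xa R (aI (supp W)) * Gh W.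
Proof. move=> cW; by rewrite Fcx_Tm ZcT. Qed.

Lemma Gh_M (W : {ffun simplex n d -> R}) :
  Gh W = \sum_(s in supp W) mconstM R (nvars n) (W s) * \prod_i hh i ^+ s i.
Proof. apply: eq_bigr => s _; by rewrite mconstME. Qed.

Definition phiF (i0 : 'I_m) (W : {ffun simplex n d -> R}) : P R n :=
  \sum_(s in supp W) mconst (nvars n) (W s) * Tm W (vv i0) s.

Lemma phiF_eq i0 (W : {ffun simplex n d -> R}) : is_wcomplex W -> balanced W ->
  phiF i0 W = zv R i0 ^+ d * Fcx W.
Proof.
move=> cW bW; have L := @lregX _ _ d (@Zc_lreg R n); apply: L.
rewrite /phiF ZcT // mulrCA ZcF // mulrCA; congr (_ * _).
transitivity (zv R i0 ^+ d * \sum_(s in supp W) mconstM R (nvars n) (W s) * \prod_i (hh i + - hh i0) ^+ s i).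
  rewrite mulr_sumr; apply: eq_bigr => s sS.
  rewrite mconstME mulrCA; congr (_ * _).
  rewrite (eq_bigr (fun i => zv R i0 ^+ s i * (hh i + - hh i0) ^+ s i)); last first.
    by move=> i _; rewrite vv_zc' exprMn.
  rewrite big_split /= prodrXr -/(mult_size s) (cW s sS) //.
congr (_ * _); rewrite (EXP_bal (mconstM R (nvars n))) //; by rewrite Gh_M.
Qed.

Lemma ga_phiF i0 (W : {ffun simplex n d -> R}) : gen_alg (phiF i0 W).
Proof.
apply: ga_sum => s _; apply: ga_mul; first exact: ga_const.
apply: ga_mul.
  apply: ga_prod => i _; apply: ga_exp; exact: ga_v.
rewrite big_seq; apply: ga_prod => I IS; apply: ga_exp; apply: ga_x; by rewrite -mem_SI.
Qed.

Lemma expf_x (s : 'I_m -> nat) (g : {set 'I_m} -> nat) I :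
  I \in SI n -> expf s g (xidx I) = g I.
Proof. move=> IS; have := allP (andP (Mmatch_expf s g)).2 I IS; by move/eqP. Qed.

Lemma xidx_lt I : I \in SI n -> (xidx I < nvars n)%N.
Proof. by move=> IS; rewrite /xidx /nvars ltn_add2l index_mem. Qed.

Lemma part1 (hn : (5 <= n)%N) (W : {ffun simplex n d -> R}) :
  is_wcomplex W -> supp W != set0 -> balanced W ->
  [/\ inCox (Fcx W), Fcx W != 0, homog_deg (Fcx W) d
    & forall I : {set 'I_m}, validI I -> ~ divCox I (Fcx W)].
Proof.
move=> cW nW bW.
have lt0 : (0 < m)%N by rewrite subn_gt0; apply: leq_trans hn.
pose i0 := Ordinal lt0.
have [s sS] := set0Pn _ nW.
have cs : mcoef (Fcx W) (expf (sv s) (gW W s)) = W s.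
  apply: mcoef_Fcx_at => //; exact: Mmatch_expf.
split.
- exists (fun I : {set 'I_m} => if i0 \in I then d else 0%N).
  change (gen_alg (xa R (fun I : {set 'I_m} => if i0 \in I then d else 0%N) * Fcx W)).
  rewrite -xa_zv -phiF_eq //; exact: ga_phiF.
- apply/eqP => F0; move: cs; rewrite F0 mcoef0 => /esym/eqP.
  by rewrite inE in sS; rewrite (negbTE sS).
- exists (DDelta (supp W)); split => //; exact: Fcx_homog.
move=> I vI [g _ E].
have IS : I \in SI n by rewrite mem_SI.
have pos : (0 < #|supp W|)%N by rewrite card_gt0.
have [s' s'S mx] := eq_bigmax_cond (fun s0 : simplex n d => \sum_(i in I) (s0 i : nat))%N pos.
have c' : mcoef (Fcx W) (expf (sv s') (gW W s')) = W s'.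
  apply: mcoef_Fcx_at => //; exact: Mmatch_expf.
have : mcoef (Fcx W) (expf (sv s') (gW W s')) = 0.
  rewrite E; apply: mcoef_mvarM0; first exact: xidx_lt.
  by rewrite expf_x // /gW /aI mx subnn.
rewrite c' => /eqP; by rewrite inE in s'S; rewrite (negbTE s'S).
Qed.

End P1.
Section TAU.
Variables (R : comNzRingType) (n d : nat).
Local Notation m := (n - 1)%N.
Local Notation PP := {poly P R n}.

Definition iotaT : {rmorphism R -> PP} := (polyC \o mconstM R (nvars n))%FUN.
Definition vT (j : nat) : PP :=
  if (insub j : option 'I_m) is Some i then (yv R i)%:P + 'X * (zv R i)%:P
  else (mvar R (nvars n) j)%:P.
Definition tau : {rmorphism P R n -> PP} := mevalM iotaT vT (nvars n).

Lemma tau_const c : tau (mconst (nvars n) c) = (mconst (nvars n) c)%:P.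
Proof. by rewrite /tau mevalM_const /= mconstME. Qed.

Lemma tau_x I : I \in SI n -> tau (xv R I) = (xv R I)%:P.
Proof.
move=> IS; rewrite /tau /xv mevalM_var; last exact: xidx_lt.
have hf : (insub (xidx I) : option 'I_m) = None.
  by apply: insubF; rewrite /xidx ltnNge leq_addr.
by rewrite /vT hf.
Qed.

Lemma tau_y i : tau (yv R i) = (yv R i)%:P + 'X * (zv R i)%:P.
Proof.
rewrite /tau /yv mevalM_var; first by rewrite /vT valK.
by rewrite /nvars (leq_trans (ltn_ord i)) // leq_addr.
Qed.

Lemma tau_prodx (Pr : pred {set 'I_m}) (F : {set 'I_m} -> nat) :
  tau (\prod_(I <- SI n | Pr I) xv R I ^+ F I) = (\prod_(I <- SI n | Pr I) xv R I ^+ F I)%:P.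
Proof.
rewrite !rmorph_prod big_seq_cond [RHS]big_seq_cond; apply: eq_bigr => I /andP [IS _].
by rewrite !rmorphXn tau_x.
Qed.

Lemma tau_z i : tau (zv R i) = (zv R i)%:P.
Proof.
have := tau_prodx (fun I => i \in I) (fun _ => 1%N).
rewrite /zv (eq_bigr (fun I => xv R I)) //; move=> I _; by rewrite expr1.
Qed.

Lemma tau_zc i : tau (zc' R i) = (zc' R i)%:P.
Proof.
have := tau_prodx (fun I => i \notin I) (fun _ => 1%N).
rewrite /zc' (eq_bigr (fun I => xv R I)) //; move=> I _; by rewrite expr1.
Qed.

Lemma tau_ga f : gen_alg f -> tau f = f%:P.
Proof.
elim=> {f}.
- exact: tau_const.
- move=> I vI; apply: tau_x; by rewrite mem_SI.
- move=> i j; rewrite rmorphB !rmorphM !tau_y !tau_z rmorphB !rmorphM; ring.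
- by move=> f _ IH; rewrite !rmorphN IH.
- by move=> f g _ IHf _ IHg; rewrite !rmorphD IHf IHg.
- by move=> f g _ IHf _ IHg; rewrite !rmorphM IHf IHg.
Qed.

Lemma tau_xa a : tau (xa R a) = (xa R a)%:P.
Proof. exact: (tau_prodx predT a). Qed.

Lemma tau_fix f : inCox f -> tau f = f%:P.
Proof.
case=> a H; have := tau_ga H; rewrite rmorphM.
change (tau (xa R a) * tau f = (xa R a * f)%:P -> tau f = f%:P).
rewrite tau_xa rmorphM; apply: lreg_polyC'; exact: xa_lreg.
Qed.

Lemma tau_h i : tau (hh R i) = (hh R i)%:P + 'X * (Zc R n)%:P.
Proof.
rewrite /hh rmorphM tau_y tau_zc -(zv_zc' R i) !rmorphM; ring.
Qed.

Definition gh (S : simplex n d) (I : {set 'I_m}) : nat := (\sum_(i | i \notin I) (S i : nat))%N.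

Lemma prod_hh (S : simplex n d) : \prod_i hh R i ^+ S i = Mm R (sv S) (gh S).
Proof.
rewrite /hh (eq_bigr (fun i => yv R i ^+ S i * zc' R i ^+ S i)); last by move=> i _; rewrite exprMn.
by rewrite big_split /= prod_zc'.
Qed.

Lemma tau_Zc : tau (Zc R n) = (Zc R n)%:P.
Proof.
have := tau_prodx predT (fun _ => 1%N).
rewrite /Zc (eq_bigr (fun I => xv R I)) //; move=> I _; by rewrite expr1.
Qed.

Lemma balanced_of (W : {ffun simplex n d -> R}) :
  is_wcomplex W -> inCox (Fcx W) -> balanced W.
Proof.
move=> cW cox.
have tf := tau_fix cox.
have E0 : tau (xa R (aI (supp W)) * Gh W) = (xa R (aI (supp W)) * Gh W)%:P.
  by rewrite -ZcF // rmorphM rmorphXn tau_Zc tf -rmorphXn -rmorphM.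
have E1 : tau (Gh W) = (Gh W)%:P.
  move: E0; rewrite rmorphM tau_xa rmorphM; apply: lreg_polyC'; exact: xa_lreg.
have E2 : \sum_(s in supp W) iotaT (W s) * \prod_i ((hh R i)%:P + 'X * (Zc R n)%:P) ^+ s i = (Gh W)%:P.
  rewrite -E1 /Gh rmorph_sum; symmetry; apply: eq_bigr => s _.
  rewrite rmorphM tau_const /iotaT /= mconstME rmorph_prod; congr (_ * _).
  apply: eq_bigr => i _; by rewrite rmorphXn tau_h.
rewrite (EXP iotaT) // in E2.
move=> j ltj S' sS'.
have Sle : forall i, (S' i < d.+1)%N.
  move=> i; rewrite ltnS; apply: leq_trans (ltnW ltj); rewrite -sS'.
  by rewrite (bigD1 i) //= leq_addr.
pose S0 : simplex n d := [ffun i => inord (S' i)].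
have tS : toN S0 = S'.
  by apply/ffunP => i; rewrite !ffunE inordK.
have mS : mult_size S0 = j.
  rewrite -sS' /mult_size; apply: eq_bigr => i _; by rewrite ffunE inordK.
pose k := (d - j)%N.
have k0 : k != 0%N by rewrite /k subn_eq0 -ltnNge.
have := congr1 (fun p : PP => p`_k) E2; rewrite coefC (negbTE k0) coef_sum.
have term : forall S : simplex n d,
   (iotaT (BS W S) * \prod_i (hh R i)%:P ^+ S i * ('X * (Zc R n)%:P) ^+ (d - mult_size S))`_k
   = (if k == (d - mult_size S)%N then Zc R n ^+ k * (mconst (nvars n) (BS W S) * Mm R (sv S) (gh S)) else 0).
  move=> S.
  have hP : \prod_i (hh R i)%:P ^+ S i = (\prod_i hh R i ^+ S i)%:P.
    by rewrite rmorph_prod; apply: eq_bigr => i _; rewrite rmorphXn.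
  rewrite hP exprMn -rmorphXn /iotaT /= mconstME.
  rewrite (_ : forall a b c : P R n, a%:P * b%:P * ('X ^+ (d - mult_size S) * c%:P) = (a * b * c)%:P * 'X^(d - mult_size S)); last first.
    move=> a b c; rewrite !rmorphM; ring.
  rewrite mul_polyC coefZ coefXn; case: eqP => [<-|_]; last by rewrite mulr0.
  by rewrite mulr1 prod_hh; ring.
rewrite (eq_bigr _ (fun S _ => term S)) => Q0.
have Q1 : \sum_(S : simplex n d) (if k == (d - mult_size S)%N then mconst (nvars n) (BS W S) * Mm R (sv S) (gh S) else 0) = 0.
  apply: (@lregX _ _ k (@Zc_lreg R n)); rewrite mulr0 mulr_sumr -[RHS]Q0; apply: eq_bigr => S _.
  by case: ifP; rewrite ?mulr0.
have := congr1 (fun p => mcoef p (expf (sv S0) (gh S0))) Q1.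
rewrite mcoef0 mcoef_sum (bigD1 S0) //= big1; last first.
  move=> S nS; case: ifP => _; last exact: mcoef0.
  rewrite mcoef_M; case: ifP => // M.
  by rewrite (Mmatch_uniq M (Mmatch_expf (sv S0) (gh S0))) eqxx in nS.
rewrite mS eqxx mcoef_M (Mmatch_expf (sv S0) (gh S0)) addr0 => B0.
by rewrite -tS.
Qed.

End TAU.
Section SURJ.
Variables (R : comNzRingType) (n d : nat).
Local Notation m := (n - 1)%N.

Lemma Mmatch_eq e (s : 'I_m -> nat) g j :
  Mmatch e s g -> (j < nvars n)%N -> e j = expf s g j.
Proof.
case/andP => /forallP H1 /allP H2 lt.
case: (ltnP j m) => lj.
  have := H1 (Ordinal lj); rewrite /expf insubT => /eqP -> //.
have lt' : (j - m < size (SI n))%N by rewrite ltn_subLR // -/(nvars n).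
have xj := xidx_nth lt'; rewrite subnKC // in xj.
have IS : nth set0 (SI n) (j - m) \in SI n by rewrite mem_nth.
rewrite -xj expf_x //; exact/eqP/H2.
Qed.

Lemma Mmatch_congr e (s : 'I_m -> nat) g g' :
  (forall I, I \in SI n -> g I = g' I) -> Mmatch e s g = Mmatch e s g'.
Proof.
move=> H; rewrite /Mmatch; congr (_ && _); apply: eq_in_all => I IS; by rewrite H.
Qed.

Lemma xa_shift a I : I \in SI n ->
  xa R (fun J => a J + (J == I))%N = xa R a * xv R I.
Proof.
move=> IS; rewrite /xa (eq_bigr (fun J => xv R J ^+ a J * xv R J ^+ (J == I))); last first.
  by move=> J _; rewrite exprD.
rewrite big_split /=; congr (_ * _).
rewrite (bigD1_seq I) //= ?SI_uniq // eqxx expr1 big1 ?mulr1 // => J /negbTE ->.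
by rewrite expr0.
Qed.

Variables (f : P R n) (D : Pic n).
Hypothesis hom : homog_of f D.
Hypothesis D1 : D.1 = Posz d.

Lemma homA e : mcoef f e != 0 -> (\sum_(i : 'I_m) e i)%N = d.
Proof.
case/hom => h1 _; move: h1; rewrite /mono_class /= sumPosz D1; by case.
Qed.

Lemma homB e I : mcoef f e != 0 -> validI I ->
  Posz (e (xidx I)) = D.2 I + Posz (\sum_(i | i \notin I) e i)%N.
Proof.
case/hom => _ h2 vI; move: (h2 I vI); rewrite /mono_class /= sumPosz => <-.
by rewrite subrK.
Qed.

Definition gD (s : simplex n d) (I : {set 'I_m}) : nat :=
  absz (D.2 I + Posz (\sum_(i | i \notin I) (s i : nat))%N)%R.
Definition eD (s : simplex n d) : nat -> nat := expf (sv s) (gD s).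
Definition Wf : {ffun simplex n d -> R} := [ffun s => mcoef f (eD s)].

Lemma coef_form e : mcoef f e != 0 ->
  exists s : simplex n d, Mmatch e (sv s) (gD s) /\ Wf s = mcoef f e.
Proof.
move=> nz.
have sA := homA nz.
have le : forall i : 'I_m, (e i < d.+1)%N.
  move=> i; rewrite ltnS -sA; by rewrite (bigD1 i) //= leq_addr.
pose s : simplex n d := [ffun i : 'I_m => inord (e i)].
have sv_s : forall i, sv s i = e i by move=> i; rewrite /sv ffunE inordK.
have M : Mmatch e (sv s) (gD s).
  apply/andP; split; first by apply/forallP => i; rewrite sv_s.
  apply/allP => I IS; rewrite /gD.
  have -> : (\sum_(i | i \notin I) (s i : nat) = \sum_(i | i \notin I) e i)%N.
    by apply: eq_bigr => i _; exact: sv_s.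
  by rewrite -homB // -?mem_SI.
exists s; split => //.
rewrite ffunE /eD; symmetry; apply: mcoef_eqe => j lj; exact: Mmatch_eq.
Qed.

Lemma supp_form s : Wf s != 0 -> mult_size s = d /\
  forall I, validI I -> Posz (gD s I) = D.2 I + Posz (\sum_(i | i \notin I) (s i : nat))%N.
Proof.
rewrite ffunE => nz; split.
  apply: etrans (homA nz); rewrite /mult_size; apply: eq_bigr => i _; by rewrite /eD /expf valK.
move=> I vI; have := homB nz vI.
have IS : I \in SI n by rewrite mem_SI.
rewrite /eD expf_x // => ->; congr (_ + Posz _); apply: eq_bigr => i _; by rewrite /expf valK.
Qed.

Hypothesis cox : inCox f.
Hypothesis fnz : f != 0.
Hypothesis ndiv : forall I : {set 'I_m}, validI I -> ~ divCox I f.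

Lemma supp_nonempty : exists s, s \in supp Wf.
Proof.
have [e ne] := mcoef_nz fnz; have [s [_ W0]] := coef_form ne.
by exists s; rewrite inE W0.
Qed.

Lemma aI_eq I : validI I -> Posz (aI (supp Wf) I) = (D.2 I + Posz d)%R.
Proof.
move=> vI; have IS : I \in SI n by rewrite mem_SI.
have [s0 s0S] := supp_nonempty.
have key : forall s, s \in supp Wf ->
   [/\ (\sum_(i in I) (s i : nat) + \sum_(i | i \notin I) (s i : nat))%N = d,
       Posz (gD s I) = (D.2 I + Posz (\sum_(i | i \notin I) (s i : nat))%N)%R &
       (\sum_(i in I) (s i : nat) <= aI (supp Wf) I)%N].
  move=> s sS; have sS' : Wf s != 0 by rewrite inE in sS.
  have [ms H] := supp_form sS'.
  split; [by rewrite -(sum_split I (fun i => (s i : nat))) | exact: H | exact: aI_ge].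
have [a1 a2 a3] := key s0 s0S.
have nn : (0 <= D.2 I + Posz d)%R.
  move: a1 a2; set B := (\sum_(i in I) _)%N; set C := (\sum_(i | _) _)%N.
  move=> a1 a2; clear -a1 a2; move: B C a1 a2 => B C a1 a2; lia.
apply/eqP; rewrite eq_le; apply/andP; split.
  have -> : (D.2 I + Posz d)%R = Posz (absz (D.2 I + Posz d)%R) by rewrite gez0_abs.
  rewrite lez_nat; apply/bigmax_leqP => s sS.
  have [b1 b2 b3] := key s sS.
  move: b1 b2; set B := (\sum_(i in I) _)%N; set C := (\sum_(i | _) _)%N.
  move=> b1 b2; clear -b1 b2 nn; move: B C b1 b2 => B C b1 b2.
  rewrite -lez_nat gez0_abs //; lia.
rewrite leNgt; apply/negP => lt.
have [a Ha] := cox.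
have dv : forall e, mcoef f e != 0 -> (0 < e (xidx I))%N.
  move=> e ne; have [s [M W0]] := coef_form ne.
  have sS : s \in supp Wf by rewrite inE W0.
  have -> : e (xidx I) = gD s I by apply/eqP; exact: (allP (andP M).2 I IS).
  have [b1 b2 b3] := key s sS.
  move: b1 b2 b3; set B := (\sum_(i in I) _)%N; set C := (\sum_(i | _) _)%N.
  move=> b1 b2 b3; clear -b1 b2 b3 lt; move: B C b1 b2 b3 => B C b1 b2 b3.
  rewrite -ltz_nat b2; lia.
have [g Eg] := mdiv (xidx_lt IS) dv.
apply: (ndiv vI); exists g => //; exists (fun J => a J + (J == I))%N.
change (gen_alg (xa R (fun J => a J + (J == I))%N * g)).
by rewrite xa_shift // -mulrA -Eg.
Qed.

Lemma gWgD s I : s \in supp Wf -> I \in SI n -> gW Wf s I = gD s I.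
Proof.
move=> sS IS; have vI : validI I by rewrite -mem_SI.
have sS' : Wf s != 0 by rewrite inE in sS.
have [ms H] := supp_form sS'.
have b1 := etrans (esym ms) (sum_split I (fun i => (s i : nat))).
have b2 := H I vI; have b3 := aI_ge I sS; have b4 := aI_eq vI.
apply/eqP; rewrite -eqz_nat; apply/eqP; rewrite b2 /gW.
move: b1 b2 b3 b4; set B := (\sum_(i in I) _)%N; set C := (\sum_(i | _) _)%N.
set A := aI _ I.
move=> b1 b2 b3 b4; clear -b1 b3 b4; move: A B C b1 b3 b4 => A B C b1 b3 b4; lia.
Qed.

Lemma Wf_complex : is_wcomplex Wf.
Proof. move=> s; rewrite inE => sS; exact: (supp_form sS).1. Qed.

Lemma Wf_eq : Fcx Wf = f.
Proof.
apply: mpoly_ext => e.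
case: (boolP (mcoef f e == 0)) => [/eqP fe | fe].
  rewrite fe; apply/eqP; apply: contraT => nz.
  have [s sS M] := mcoef_Fcx_nz nz.
  have M' : Mmatch e (sv s) (gD s).
    by rewrite -(Mmatch_congr _ _ (fun I IS => gWgD sS IS)).
  move: sS; rewrite inE ffunE /eD.
  rewrite -(@mcoef_eqe _ _ _ e); first by rewrite fe eqxx.
  by move=> j lj; exact: Mmatch_eq.
have [s [M W0]] := coef_form fe.
have sS : s \in supp Wf by rewrite inE W0.
rewrite -W0; apply: mcoef_Fcx_at => //.
by rewrite (Mmatch_congr _ _ (fun I IS => gWgD sS IS)).
Qed.

End SURJ.
Local Close Scope ring_scope.

Theorem mainTheorem2 (R : comNzRingType) (n d : nat) (hn : 5 <= n) (hd : 1 <= d) :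
  (* source: balanced R-weighted (d-1)-complexes on [n-1] *)
  let Src := fun W : {ffun simplex n d -> R} =>
    [/\ is_wcomplex W, supp W != set0 & balanced W] in
  (* target: nonzero homogeneous degree-d elements of Cox not divisible by any x_I *)
  let Tgt := fun f : P R n =>
    [/\ inCox f, f != 0%R, homog_deg f d
      & forall I : {set 'I_(n-1)}, validI I -> ~ divCox I f] in
  [/\ (forall W, Src W -> Tgt (Fcx W)),
      (forall W1 W2, Src W1 -> Src W2 -> Fcx W1 = Fcx W2 -> W1 = W2),
      (forall f, Tgt f -> exists2 W, Src W & Fcx W = f)
    & (forall Delta : {set simplex n d}, is_complex Delta ->
       forall W : {ffun simplex n d -> R}, supp W = Delta -> balanced W ->
         homog_of (Fcx W) (DDelta Delta))].
Proof.
move=> Src Tgt; split.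
- move=> W [cW nW bW]; exact: part1.
- move=> W1 W2 _ _; exact: Fcx_inj.
- move=> f [cox fnz [D [hom D1]] ndiv].
  have cW := @Wf_complex R n d f D hom D1.
  have E := @Wf_eq R n d f D hom D1 cox fnz ndiv.
  exists (@Wf R n d f D) => //; split => //.
    have [s sS] := @supp_nonempty R n d f D hom D1 fnz.
    by apply/set0Pn; exists s.
  apply: balanced_of => //; by rewrite E.
- move=> Delta cD W sW _; exact: Fcx_homog.
Qed.
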